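(* For every $n\ge1$, among all pairs $(S,\sigma)$ with $S\subset\mathbb{Z}_{>0}$ finite of cardinality $n$ and $\sigma$ a permutation of $S$, the identity permutation of $S_n=\{1,\dots,n\}$ is the unique one minimizing $v(\sigma,\Psi)$.
   Context: Let $p$ be a prime and $y\in\mathbb{Z}_p$ not a non-negative integer, with $p$-adic digits $y=\sum_{n\ge0}y_np^n$, $0\le y_n<p$. Let $\pi,\theta$ be indeterminates and $\beta=\prod_{n\ge0}(1-\pi^{p^n}\theta)^{y_n}\in\mathbb{F}_p[[\pi]][[\theta]]$, written $\beta=\sum_{n\ge0}a_n\theta^n$; put $a_n=0$ for $n<0$. Let $\Psi$ be the $\mathbb{Z}_{>0}\times\mathbb{Z}_{>0}$ matrix with $\Psi_{m_1,m_2}=a_{pm_1-m_2}$. For a finite $S\subset\mathbb{Z}_{>0}$ and permutation $\sigma$ of $S$, $v(\sigma,\Psi)=\sum_{k\in S}v_\pi(\Psi_{k,\sigma(k)})\in\mathbb{Z}_{\ge0}\cup\{\infty\}$, where $v_\pi$ is the $\pi$-adic valuation with $v_\pi(0)=\infty$. *)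

(* Defs.v *)
From Stdlib Require Import ClassicalEpsilon.
From mathcomp Require Import all_boot all_order all_algebra.
From mathcomp Require Import finmap.
Set Implicit Arguments. Unset Strict Implicit. Unset Printing Implicit Defensive.
Import GRing.Theory.
Local Open Scope ring_scope.
Local Open Scope fset_scope.

(* Extended naturals Z_{>=0} \cup {oo}: None = oo. *)
Definition enat := option nat.
Definition eadd (a b : enat) : enat :=
  match a, b with Some x, Some y => Some (x + y)%N | _, _ => None end.
Definition elt (a b : enat) : bool :=
  match a, b with
  | Some x, Some y => (x < y)%N
  | Some _, None => true
  | None, _ => false
  end.

(* The p-adic integer y is given by its digit sequence yd (yd n < p). *)

(* Truncation of beta = prod_{n>=0} (1 - pi^{p^n} theta)^{y_n} to the
   factors n < N, as an element of F_p[pi][theta] : outer variable theta,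
   inner variable pi. *)
Definition beta_trunc (p : nat) (yd : nat -> nat) (N : nat) : {poly {poly 'F_p}} :=
  \prod_(n < N) (1 - ('X ^+ (p ^ n))%:P * 'X) ^+ (yd n).

(* Coefficient of pi^m in a_k (coefficient of theta^k in beta).  Factors with
   index n >= m+1 only affect pi-degrees >= p^n > m, so the truncation to
   m+1 factors gives the exact pi^m coefficient of the infinite product. *)
Definition acoef (p : nat) (yd : nat -> nat) (k m : nat) : 'F_p :=
  ((beta_trunc p yd m.+1)`_k)`_m.

Definition Psi (p : nat) (yd : nat -> nat) (m1 m2 : nat) (m : nat) : 'F_p :=
  if (m2 <= p * m1)%N then acoef p yd (p * m1 - m2) m else 0.

Definition vpi (p : nat) (f : nat -> 'F_p) : enat :=
  match excluded_middle_informative (exists m, f m != 0) with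
  | left H => Some (@ex_minn (fun m => f m != 0) H)
  | right _ => None
  end.

Definition vsig (p : nat) (yd : nat -> nat) (s : seq nat) (sigma : nat -> nat) : enat :=
  \big[eadd/Some 0%N]_(k <- s) vpi (Psi p yd k (sigma k)).

(* Main.v *)
From Stdlib Require Import ClassicalEpsilon.
Require Import Defs.
From mathcomp Require Import all_boot all_order all_algebra.
From mathcomp Require Import finmap zify.
Set Implicit Arguments. Unset Strict Implicit. Unset Printing Implicit Defensive.

Section Comb.
Variables (p : nat) (yd : nat -> nat).
Hypothesis hp : prime p.
Hypothesis hdig : forall n, yd n < p.
Hypothesis hnotnat : forall N, exists n, (N <= n)%N /\ yd n <> 0%N.

Definition cum N := \sum_(j < N) yd j.

Lemma cumS N : cum N.+1 = cum N + yd N.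
Proof. by rewrite /cum big_ord_recr. Qed.

Lemma cum0 : cum 0 = 0.
Proof. by rewrite /cum big_ord0. Qed.

Lemma cum_mono a b : a <= b -> cum a <= cum b.
Proof.
move=> /subnK <-; elim: (b - a) => [|d IH]; first by rewrite add0n.
by rewrite addSn cumS; apply: leq_trans IH _; apply: leq_addr.
Qed.

Lemma cum_unb x : exists N, x < cum N.
Proof.
elim: x => [|x [N HN]].
  have [n [_ hn]] := hnotnat 0; exists n.+1; rewrite cumS; lia.
have [n [hn1 hn2]] := hnotnat N; exists n.+1; rewrite cumS.
have := cum_mono hn1; lia.
Qed.

Lemma ex_ni i : exists m, i < cum m.+1.
Proof.
have [[|N] HN] := cum_unb i; first by rewrite cum0 in HN.
by exists N.
Qed.

Definition ni i := ex_minn (ex_ni i).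

Lemma ni_lt i : i < cum (ni i).+1.
Proof. by rewrite /ni; case: ex_minnP. Qed.

Lemma ni_min i m : i < cum m.+1 -> ni i <= m.
Proof. by rewrite /ni; case: ex_minnP => k _ H /H. Qed.

Lemma ni_ge i : cum (ni i) <= i.
Proof.
case E: (ni i) => [|m]; first by rewrite cum0.
rewrite leqNgt; apply/negP => /ni_min; lia.
Qed.

Lemma ni_mono i j : i <= j -> ni i <= ni j.
Proof. move=> hij; apply: ni_min; have := ni_lt j; lia. Qed.

Lemma ni_eq i N : cum N <= i -> i < cum N.+1 -> ni i = N.
Proof.
move=> h1 h2; apply/eqP; rewrite eqn_leq ni_min //=.
rewrite leqNgt; apply/negP => hlt.
have := cum_mono hlt; have := ni_lt i; lia.
Qed.

Lemma ni_ltN i N : i < cum N -> ni i < N.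
Proof.
case: N => [|N]; first by rewrite cum0.
by move=> /ni_min.
Qed.

Lemma ni_jump i : ni i < ni (i + p.-1).
Proof.
rewrite ltnNge; apply/negP => hle.
have h1 := ni_ge i. have h2 := ni_lt (i + p.-1).
have := cum_mono (hle : (ni (i + p.-1)).+1 <= (ni i).+1).
rewrite [cum (ni i).+1]cumS; have := hdig (ni i); have := prime_gt1 hp; rewrite -subn1 in h2 *; lia.
Qed.

Definition s i := p ^ ni i.
Definition D x := \sum_(i < x) s i.

Lemma p_gt1 : 1 < p. Proof. exact: prime_gt1. Qed.

Lemma s_gt0 i : 0 < s i.
Proof. by rewrite /s expn_gt0; have := p_gt1; lia. Qed.

Lemma s_mono i j : i <= j -> s i <= s j.
Proof. by move=> h; rewrite /s leq_pexp2l ?ni_mono //; have := p_gt1; lia. Qed.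

Lemma s_jump i j : i + p.-1 <= j -> s i < s j.
Proof.
move=> h; rewrite /s ltn_exp2l ?p_gt1 //.
apply: leq_trans (ni_jump i) (ni_mono h).
Qed.

Lemma D_add a L : D (a + L) = D a + \sum_(i < L) s (a + i).
Proof.
elim: L => [|L IH]; first by rewrite addn0 big_ord0 addn0.
by rewrite addnS /D big_ord_recr /= -/(D _) IH big_ord_recr /= addnA.
Qed.

Lemma DS x : D x.+1 = D x + s x.
Proof. by rewrite /D big_ord_recr. Qed.

Lemma D_mono x y : x <= y -> D x <= D y.
Proof. by move=> /subnK <-; rewrite addnC D_add leq_addr. Qed.

Lemma D_smono x y : x < y -> D x < D y.
Proof.
move=> h; apply: leq_trans (D_mono h); rewrite DS; have := s_gt0 x; lia.
Qed.

Lemma D_conv t u w z : t <= u -> u <= z -> t + z = u + w ->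
  D u + D w <= D t + D z.
Proof.
move=> htu huz he.
have hw : w = t + (z - u) by lia.
have hz : z = w + (u - t) by lia.
have hu : u = t + (u - t) by lia.
rewrite hz hu D_add -hu D_add.
have : \sum_(i < u - t) s (t + i) <= \sum_(i < u - t) s (w + i).
  by apply: leq_sum => i _; apply: s_mono; lia.
lia.
Qed.

Lemma D_conv_strict t u w z : t < u -> u <= z -> t + z = u + w ->
  u + p.-1 <= z -> D u + D w < D t + D z.
Proof.
move=> htu huz he hp1.
have hz : z = w + (u - t) by lia.
have hu : u = t + (u - t) by lia.
rewrite hz hu D_add -hu D_add.
have : \sum_(i < u - t) s (t + i) < \sum_(i < u - t) s (w + i).
  case E: (u - t) => [|L]; first lia.
  rewrite !big_ord_recr /=.
  have : \sum_(i < L) s (t + i) <= \sum_(i < L) s (w + i).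
    by apply: leq_sum => i _; apply: s_mono; lia.
  have : s (t + L) < s (w + L) by apply: s_jump; lia.
  by move=> h1 h2; rewrite -addnS; apply: leq_add.
lia.
Qed.


Lemma sum_const_ord L c : \sum_(i < L) c = L * c.
Proof. by rewrite sum_nat_const card_ord. Qed.

Lemma D_block N k : k <= cum N.+1 ->
  D (minn k (cum N)) + p ^ N * (k - minn k (cum N)) = D k.
Proof.
move=> hk; case: (leqP k (cum N)) => h.
  by rewrite subnn muln0 addn0.

have hk2 : k = cum N + (k - cum N) by lia.
rewrite {2}hk2 D_add (eq_bigr (fun _ => p ^ N)); first by rewrite sum_const_ord mulnC.
move=> i _; rewrite /s (@ni_eq _ N) //; first lia.
have := ltn_ord i; rewrite cumS in hk *; lia.
Qed.

Lemma D_other N i k : i < cum N -> i < k -> k <= cum N.+1 ->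
  D k < D i + p ^ N * (k - i).
Proof.
move=> hi hik hk.
have -> : k = i + (k - i) by lia.
rewrite D_add addKn ltn_add2l.
case E: (k - i) => [|L]; first lia.
rewrite big_ord_recl mulnS -addSn; apply: leq_add.
  rewrite /s ltn_exp2l ?p_gt1 // addn0; exact: ni_ltN.
rewrite mulnC -sum_const_ord; apply: leq_sum => j _.
rewrite /s; apply: leq_pexp2l; first by have := p_gt1; lia.
apply: ni_min; rewrite lift0; have := ltn_ord j; lia.
Qed.

Lemma max_in (x : nat) r : exists M, M \in x :: r /\ {in x :: r, forall k, k <= M}.
Proof.
elim: r => [|y r [M [hM hle]]].
  by exists x; split; rewrite ?inE // => k; rewrite inE => /eqP ->.
exists (maxn y M); split.
  case: (leqP y M) => h; first by rewrite !inE; rewrite inE in hM; case/orP: hM => ->; rewrite ?orbT.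
  by rewrite !inE eqxx orbT.
move=> k; rewrite !inE => /or3P [/eqP->|/eqP->|hk].
- by rewrite leq_max (hle x) ?inE ?eqxx ?orbT.
- by rewrite leq_max leqnn.
- by rewrite leq_max (hle k) ?inE ?hk ?orbT.
Qed.

Definition Fs (r : seq nat) (sg : nat -> nat) := \sum_(k <- r) D (p * k - sg k).
Definition In n := \sum_(k <- iota 1 n) D (p * k - k).

Lemma pk k : p * k - k = p.-1 * k.
Proof. by rewrite -{2}(mul1n k) -mulnBl subn1. Qed.

Lemma InS n : In n.+1 = In n + D (p * n.+1 - n.+1).
Proof.
have e : iota 1 n.+1 = iota 1 n ++ [:: n.+1] by have := iotaD 1 n 1; rewrite addn1 add1n.
by rewrite /In e big_cat big_seq1.
Qed.

Lemma comb n : forall r sg, size r = n -> uniq r -> (forall k, k \in r -> 0 < k) ->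
  {in r, forall k, sg k \in r} -> {in r &, injective sg} -> {in r, forall k, sg k <= p * k} ->
  In n <= Fs r sg /\ ((perm_eq r (iota 1 n) /\ {in r, forall k, sg k = k}) \/ In n < Fs r sg).
Proof.
have hp1 : 0 < p.-1 by have := p_gt1; lia.
elim: n => [|n IH] r sg hsz hu hpos hmap hinj hgood.
  move/size0nil: hsz => ->; rewrite /In /Fs big_nil; split => //; left; split => //.
case: r hsz hu hpos hmap hinj hgood => [//|x r0] hsz hu hpos hmap hinj hgood.
have [M [hM hle]] := max_in x r0.
set r := x :: r0 in hsz hu hpos hmap hinj hgood hM hle *.
set r' := rem M r.
have hperm : perm_eq r (M :: r') := perm_to_rem hM.
have hmem' : forall k, (k \in r') = (k != M) && (k \in r) by move=> k; rewrite /r' (mem_rem_uniq _ hu).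
have hsz' : size r' = n by rewrite /r' size_rem // hsz.
have hu' : uniq r' by exact: rem_uniq.
have hnM : n.+1 <= M.
  rewrite -hsz -(size_iota 1 M); apply: uniq_leq_size => // k hk.
  by rewrite mem_iota (hpos _ hk) /= add1n ltnS hle.
have hFs : Fs r sg = D (p * M - sg M) + Fs r' sg by rewrite /Fs (perm_big _ hperm) big_cons.
have hsgM : sg M \in r := hmap _ hM.
have hsgMle : sg M <= M := hle _ hsgM.
pose sg' k := if sg k == M then sg M else sg k.
have hsgk : forall k, k \in r' -> sg k = M -> sg M != M.
  move=> k hk hk2; apply/negP => /eqP e.
  rewrite hmem' in hk; case/andP: hk => /eqP hkM hk.
  by apply: hkM; apply: hinj => //; rewrite hk2 e.
have hmap' : {in r', forall k, sg' k \in r'}.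
  move=> k hk; have hkr : k \in r by move: hk; rewrite hmem' => /andP[].
  rewrite /sg'; case: (eqVneq (sg k) M) => e.
    by rewrite hmem' (hsgk _ hk e).
  by rewrite hmem' e hmap.
have hinj' : {in r' &, injective sg'}.
  move=> k1 k2 hk1 hk2; have hk1' := hk1; have hk2' := hk2.
  rewrite hmem' in hk1'; rewrite hmem' in hk2'; case/andP: hk1' => /eqP n1 i1; case/andP: hk2' => /eqP n2 i2.
  rewrite /sg'; case: (eqVneq (sg k1) M) => e1; case: (eqVneq (sg k2) M) => e2.
  - by move=> _; apply: hinj => //; rewrite e1 e2.
  - by move=> e; exfalso; apply: n2; apply: hinj => //.
  - by move=> e; exfalso; apply: n1; apply: hinj => //.
  - by apply: hinj.
have hgood' : {in r', forall k, sg' k <= p * k}.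
  move=> k hk; have hk' : k \in r by move: hk; rewrite hmem' => /andP[].
  rewrite /sg'; case: (eqVneq (sg k) M) => e; last exact: hgood.
  by apply: leq_trans hsgMle _; rewrite -e hgood.
have hpos' : forall k, k \in r' -> 0 < k.
  by move=> k; rewrite hmem' => /andP[_ /hpos].
have [IH1 IH2] := IH r' sg' hsz' hu' hpos' hmap' hinj' hgood'.
case: (eqVneq (sg M) M) => hfix.
  have hF' : Fs r' sg' = Fs r' sg.
    apply: eq_big_seq => k hk; rewrite /sg'; case: (eqVneq (sg k) M) => // e.
    by have := hsgk _ hk e; rewrite hfix eqxx.
  rewrite hF' in IH1 IH2.
  rewrite InS hFs hfix.
  have hD : D (p * n.+1 - n.+1) <= D (p * M - M) by apply: D_mono; rewrite !pk leq_mul2l hnM orbT.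
  split; first by rewrite addnC leq_add.
  case: (ltnP n.+1 M) => hnM2.
    right; rewrite addnC -addSn; apply: leq_add => //.
    by apply: D_smono; rewrite !pk ltn_mul2l hp1.
  have eM : M = n.+1 by apply/eqP; rewrite eqn_leq hnM2 hnM.
  case: IH2 => [[hpe hid]|hlt]; last by right; rewrite addnC -addnS; apply: leq_add.
  left; split.
    apply: perm_trans hperm _.
    have e : iota 1 n.+1 = iota 1 n ++ [:: n.+1] by have := iotaD 1 n 1; rewrite addn1 add1n.
    by rewrite e -cat1s -eM perm_catC perm_cat2r.
  move=> k hk; case: (eqVneq k M) => [->//|hkM].
  have hk' : k \in r' by rewrite hmem' hkM.
  have := hid _ hk'; rewrite /sg'; case: (eqVneq (sg k) M) => // e.
  by have := hsgk _ hk' e; rewrite hfix eqxx.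
have hmapr : M \in [seq sg i | i <- r].
  have hu1 : uniq [seq sg i | i <- r] by rewrite map_inj_in_uniq.
  have hs1 : {subset [seq sg i | i <- r] <= r} by move=> y /mapP [k hk ->]; apply: hmap.
  have hs2 : size r <= size [seq sg i | i <- r] by rewrite size_map.
  have [_ heq] := uniq_min_size hu1 hs1 hs2.
  by rewrite heq.
case/mapP: hmapr => ks hks eks.
have hksM : ks != M by apply/eqP => e; rewrite e in eks; rewrite -eks eqxx in hfix.
have hks' : ks \in r' by rewrite hmem' hksM.
set r'' := rem ks r'.
have hperm' : perm_eq r' (ks :: r'') := perm_to_rem hks'.
have hmem'' : forall k, (k \in r'') = (k != ks) && (k \in r') by move=> k; rewrite /r'' (mem_rem_uniq _ hu').
have hR : Fs r'' sg' = Fs r'' sg.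
  apply: eq_big_seq => k hk; rewrite /sg'; case: (eqVneq (sg k) M) => // e.
  exfalso; move: hk; rewrite hmem'' => /andP [/eqP hne hk].
  apply: hne; apply: hinj; rewrite ?e //.
  by move: hk; rewrite hmem' => /andP[].
have hF1 : Fs r' sg = D (p * ks - M) + Fs r'' sg by rewrite /Fs (perm_big _ hperm') big_cons eks.
have hF2 : Fs r' sg' = D (p * ks - sg M) + Fs r'' sg.
  by rewrite /Fs (perm_big _ hperm') big_cons -/(Fs r'' sg') hR /sg' -eks eqxx.
have hksle : ks <= M := hle _ hks.
have hkslt : ks < M by rewrite ltn_neqAle hksM hksle.
have hgks : M <= p * ks by rewrite eks; apply: hgood.
have hsgMlt : sg M < M by rewrite ltn_neqAle hfix hsgMle.
have hpM : p * ks + p <= p * M by rewrite addnC -mulnS leq_mul2l hkslt orbT.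
have hMpM : M <= p * M by rewrite leq_pmull //; have := p_gt1; lia.
have hpred : p.-1 = p - 1 by rewrite subn1.
have hconv : D (p * ks - sg M) + D (p * M - M) < D (p * ks - M) + D (p * M - sg M).
  apply: D_conv_strict; rewrite ?hpred; lia.
have hD : D (p * n.+1 - n.+1) <= D (p * M - M) by apply: D_mono; rewrite !pk leq_mul2l hnM orbT.
rewrite hF2 in IH1.
have hlt : In n.+1 < Fs r sg.
  rewrite InS hFs hF1; lia.
by split; [apply: ltnW | right].
Qed.
Import GRing.Theory.
Local Open Scope ring_scope.

Definition vge (q : {poly 'F_p}) v := forall m, (m < v)%N -> q`_m = 0.
Definition lowv (q : {poly 'F_p}) v := vge q v /\ q`_v != 0.

Lemma vge_le q v w : vge q v -> (w <= v)%N -> vge q w.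
Proof. by move=> h hwv m hm; apply: h; apply: leq_trans hm hwv. Qed.

Lemma vge0 v : vge 0 v.
Proof. by move=> m _; rewrite coef0. Qed.

Lemma vge_add q r v : vge q v -> vge r v -> vge (q + r) v.
Proof. by move=> h1 h2 m hm; rewrite coefD h1 ?h2 ?addr0. Qed.

Lemma vge_sum (I : Type) (r : seq I) (P : pred I) (F : I -> {poly 'F_p}) v :
  (forall i, P i -> vge (F i) v) -> vge (\sum_(i <- r | P i) F i) v.
Proof.
move=> h; apply: (big_ind (fun q => vge q v)); [exact: vge0|move=> ? ? ? ?; exact: vge_add|exact: h].
Qed.

Lemma vge_mul q r a b : vge q a -> vge r b -> vge (q * r) (a + b).
Proof.
move=> h1 h2 m hm; rewrite coefM big1 // => i _.
case: (ltnP i a) => hi; first by rewrite h1 ?mul0r.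
by rewrite h2 ?mulr0 //; move: (ltn_ord i) => ?; lia.
Qed.

Lemma lowv_mul q r a b : lowv q a -> lowv r b -> lowv (q * r) (a + b).
Proof.
move=> [h1 n1] [h2 n2]; split; first exact: vge_mul.
have ha : (a < (a + b).+1)%N by lia.
rewrite coefM (bigD1 (Ordinal ha)) //= big1 ?addr0.
  by rewrite addKn mulf_neq0.
move=> i /eqP hi; have hi' : (nat_of_ord i != a) by apply/eqP => e; apply: hi; apply: val_inj.
case: (ltnP i a) => h; first by rewrite h1 ?mul0r.
by rewrite h2 ?mulr0 //; move: (ltn_ord i) => ?; lia.
Qed.

Lemma lowv_add q r v : lowv q v -> vge r v.+1 -> lowv (q + r) v.
Proof.
move=> [h1 n1] h2; split.
  by apply: vge_add => //; apply: vge_le h2 _.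
by rewrite coefD h2 ?addr0.
Qed.

Lemma Xcoef (a : 'F_p) e m : (a%:P * 'X^e)`_m = if m == e then a else 0.
Proof. by rewrite coefCM coefXn; case: eqP => _; rewrite ?mulr1 ?mulr0. Qed.

Lemma vge_X (a : 'F_p) e : vge (a%:P * 'X^e) e.
Proof. by move=> m hm; rewrite Xcoef; case: eqP => // ?; lia. Qed.

Lemma lowv_X (a : 'F_p) e : a != 0 -> lowv (a%:P * 'X^e) e.
Proof. by move=> ha; split; [exact: vge_X | rewrite Xcoef eqxx]. Qed.

Lemma fact_ndvd y : (y < p)%N -> ~~ (p %| y`!)%N.
Proof.
elim: y => [|y IH] hy.
  by rewrite fact0 dvdn1; move: p_gt1; case: (p) => [|[]].
rewrite factS Euclid_dvdM // negb_or IH ?andbT; last lia.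
by apply/negP => /dvdn_leq => /(_ isT); lia.
Qed.

Lemma binF_neq0 y j : (y < p)%N -> (j <= y)%N -> ((-1) ^+ j *+ 'C(y, j) : 'F_p) != 0.
Proof.
move=> hy hj; rewrite -mulr_natr mulf_neq0 ?signr_eq0 //.
rewrite -(dvdn_pcharf (pchar_Fp hp)); apply/negP => hd.
have := fact_ndvd hy; rewrite -(bin_fact hj).
by rewrite dvdn_mulr.
Qed.

Definition Q N : {poly {poly 'F_p}} := (1 - ('X ^+ (p ^ N))%:P * 'X) ^+ (yd N).

Lemma Qcoef N j : (Q N)`_j = ((-1) ^+ j *+ 'C(yd N, j))%:P * 'X^(p ^ N * j).
Proof.
rewrite /Q.
have -> : 1 - ('X ^+ (p ^ N))%:P * 'X = (- ('X ^+ (p ^ N)))%:P * 'X + 1 :> {poly {poly 'F_p}}.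
  by rewrite addrC polyCN mulNr.
rewrite exprD1n coef_sum.
under eq_bigr => i _ do rewrite coefMn exprMn -rmorphXn /= coefCM coefXn.
case: (ltnP j (yd N).+1) => hj.
  rewrite (bigD1 (Ordinal hj)) //= big1 ?addr0 ?eqxx ?mulr1.
    by rewrite [in RHS]polyCMn rmorphXn /= polyCN polyC1 mulrnAl [in LHS]exprNn -exprM.
  move=> i /eqP hi; have : j != i by apply/eqP => e; apply: hi; apply: val_inj.
  by move/negbTE => ->; rewrite mulr0 mul0rn.
rewrite big1 ?bin_small ?mulr0n ?polyC0 ?mul0r //.
move=> i _; have : j != i by apply/eqP => e; move: (ltn_ord i); lia.
by move/negbTE => ->; rewrite mulr0 mul0rn.
Qed.


Lemma betaS N : beta_trunc p yd N.+1 = beta_trunc p yd N * Q N.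
Proof. by rewrite /beta_trunc big_ord_recr. Qed.

Lemma Qcoef_vge N j : vge ((Q N)`_j) (p ^ N * j).
Proof. rewrite Qcoef; exact: vge_X. Qed.

Lemma Qcoef_big N j : (yd N < j)%N -> (Q N)`_j = 0.
Proof. by move=> h; rewrite Qcoef bin_small // mulr0n polyC0 mul0r. Qed.

Lemma Qcoef_low N j : (j <= yd N)%N -> lowv ((Q N)`_j) (p ^ N * j).
Proof. by move=> h; rewrite Qcoef; apply: lowv_X; apply: binF_neq0. Qed.

Lemma Bmain N : (forall k, (cum N < k)%N -> (beta_trunc p yd N)`_k = 0) /\
  (forall k, (k <= cum N)%N -> lowv ((beta_trunc p yd N)`_k) (D k)).
Proof.
elim: N => [|N [IH0 IH1]].
  rewrite /beta_trunc big_ord0 cum0; split => k hk.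
    by rewrite coef1; case: k hk.
  have -> : k = 0%N by case: k hk.
  split; first by move=> m; rewrite /D big_ord0.
  by rewrite /D big_ord0 !coef1 !eqxx; exact: oner_neq0.
rewrite betaS; split => k hk.
  rewrite coefM big1 // => i _.
  case: (ltnP (cum N) i) => hi; first by rewrite IH0 ?mul0r.
  rewrite Qcoef_big ?mulr0 //; move: hk; rewrite cumS; have := ltn_ord i; lia.
have hi0 : (minn k (cum N) < k.+1)%N by rewrite ltnS geq_minl.
rewrite coefM (bigD1 (Ordinal hi0)) //=.
apply: lowv_add.
  rewrite -(D_block hk); apply: lowv_mul; first by apply: IH1; exact: geq_minr.
  by apply: Qcoef_low; move: hk; rewrite cumS; lia.
apply: vge_sum => i /eqP hne.
have hne' : nat_of_ord i != minn k (cum N) by apply/eqP => e; apply: hne; apply: val_inj.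
case: (ltnP (cum N) i) => hi; first by rewrite IH0 ?mul0r //; exact: vge0.
have hik := ltn_ord i.
have hlt : (i < minn k (cum N))%N.
  rewrite ltn_neqAle hne' leq_min hi andbT; by [].
apply: vge_le; first by apply: vge_mul; [exact: (IH1 _ hi).1 | exact: Qcoef_vge].
apply: D_other => //.
- by move: hlt; rewrite leq_min => /andP[].
- by move: hlt; rewrite leq_min => /andP[].
Qed.

Lemma stab N k m : (m < p ^ N)%N ->
  ((beta_trunc p yd N.+1)`_k)`_m = ((beta_trunc p yd N)`_k)`_m.
Proof.
move=> hm; rewrite betaS coefM big_ord_recr /= subnn coefD.
have -> : (Q N)`_0 = 1 by rewrite Qcoef bin0 expr0 mulr1n polyC1 mul1r muln0 expr0.
rewrite mulr1.
suff -> : (\sum_(i < k) (beta_trunc p yd N)`_(widen_ord (leqnSn k) i) * (Q N)`_(k - widen_ord (leqnSn k) i))`_m = 0 by rewrite add0r.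
apply: (@vge_sum _ _ _ _ (p ^ N)%N) => //= i _.
apply: (@vge_le _ (0 + p ^ N * (k - i))%N).
  apply: vge_mul; [by move=> ? | exact: Qcoef_vge].
rewrite add0n -{1}(muln1 (p ^ N)%N) leq_mul2l subn_gt0 ltn_ord orbT //.
Qed.

Lemma stab_iter N d k m : (m < p ^ N)%N ->
  ((beta_trunc p yd (d + N))`_k)`_m = ((beta_trunc p yd N)`_k)`_m.
Proof.
move=> hm; elim: d => [//|d IH].
rewrite addSn stab // (leq_trans hm) // leq_pexp2l ?leq_addl //.
by have := p_gt1; lia.
Qed.

Lemma acoef_eq k m N : (m < N)%N -> acoef p yd k m = ((beta_trunc p yd N)`_k)`_m.
Proof.
move=> hmN; rewrite /acoef.
have -> : N = (N - m.+1 + m.+1)%N by rewrite subnK.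
rewrite stab_iter //; apply: leq_trans (ltn_expl m p_gt1) _.
by rewrite leq_pexp2l ?leqnSn //; have := p_gt1; lia.
Qed.

Lemma acoef_val x : (forall m, (m < D x)%N -> acoef p yd x m = 0) /\ acoef p yd x (D x) != 0.
Proof.
have [N0 hN0] := cum_unb x.
set N := maxn N0 (D x).+1.
have hxN : (x <= cum N)%N by apply: leq_trans (ltnW hN0) (cum_mono (leq_maxl _ _)).
have [hv hn] := (Bmain N).2 _ hxN.
have hDN : (D x < N)%N by apply: leq_trans (leq_maxr _ _).
split.
  by move=> m hm; rewrite (@acoef_eq _ _ N) ?hv // (ltn_trans hm hDN).
by rewrite (@acoef_eq _ _ N).
Qed.

Lemma vpi_some (f : nat -> 'F_p) v : (forall m, (m < v)%N -> f m = 0) -> f v != 0 -> vpi f = Some v.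
Proof.
move=> h0 hv; rewrite /vpi; case: excluded_middle_informative => [H|H]; last first.
  by exfalso; apply: H; exists v.
congr Some; case: ex_minnP => m hm hmin.
apply/eqP; rewrite eqn_leq hmin //= leqNgt; apply/negP => hlt.
by move: hm; rewrite h0 ?eqxx.
Qed.

Lemma vpi_none (f : nat -> 'F_p) : (forall m, f m = 0) -> vpi f = None.
Proof.
move=> h0; rewrite /vpi; case: excluded_middle_informative => [H|H] //.
by exfalso; case: H => m; rewrite h0 eqxx.
Qed.

Lemma vpi_Psi k j : (j <= p * k)%N -> vpi (Psi p yd k j) = Some (D (p * k - j)%N).
Proof.
move=> h; have [h1 h2] := acoef_val (p * k - j)%N.
by apply: vpi_some => [m hm|]; rewrite /Psi h; [apply: h1 | apply: h2].
Qed.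

Lemma vpi_Psi_none k j : (p * k < j)%N -> vpi (Psi p yd k j) = None.
Proof.
by move=> h; apply: vpi_none => m; rewrite /Psi leqNgt h.
Qed.

Lemma vsig_some (r : seq nat) sg : {in r, forall k, (sg k <= p * k)%N} ->
  vsig p yd r sg = Some (Fs r sg).
Proof.
elim: r => [|x r IH] h; first by rewrite /vsig /Fs !big_nil.
rewrite /vsig /Fs !big_cons -/(vsig p yd r sg) -/(Fs r sg) IH.
  by rewrite vpi_Psi // h // inE eqxx.
by move=> k hk; apply: h; rewrite inE hk orbT.
Qed.

Lemma vsig_none (r : seq nat) sg k : k \in r -> (p * k < sg k)%N -> vsig p yd r sg = None.
Proof.
elim: r => [//|x r IH]; rewrite inE => /orP [/eqP ->|hk] h.
  by rewrite /vsig big_cons vpi_Psi_none.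
rewrite /vsig big_cons -/(vsig p yd r sg) IH //.
by case: (vpi _).
Qed.

End Comb.

Local Open Scope fset_scope.
Unset Implicit Arguments.

Theorem corollary5p8 (p : nat) (yd : nat -> nat)
  (hp : prime p)
  (hdig : forall n, (yd n < p)%N)
  (hnotnat : forall N, exists n, (N <= n)%N /\ yd n <> 0%N)
  (n : nat) (hn : (1 <= n)%N) :
  forall (S : {fset nat}) (sigma : nat -> nat),
    (forall k, k \in S -> (0 < k)%N) ->
    #|` S| = n ->
    {in S, forall k, sigma k \in S} ->
    {in S &, injective sigma} ->
    ((forall k, (k \in S) = (k \in iota 1 n)) /\ {in S, forall k, sigma k = k})
    \/ elt (vsig p yd (iota 1 n) id) (vsig p yd (enum_fset S) sigma).
Proof.
move=> S sg hpos hcard hmap hinj.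
have hid : vsig p yd (iota 1 n) id = Some (In hp hnotnat n).
  rewrite (vsig_some hp hdig hnotnat) //= => k _.
  by rewrite leq_pmull // prime_gt0.
case: (boolP [forall k : S, sg (val k) <= p * val k]%N) => hall.
  have hg : {in enum_fset S, forall k, (sg k <= p * k)%N}.
    by move=> k hk; have := (forallP hall) [` hk].
  rewrite hid (vsig_some hp hdig hnotnat) //=.
  have := @comb p yd hp hdig hnotnat n (enum_fset S) sg hcard (fset_uniq _) hpos hmap hinj hg.
  case=> _ [[hpe hid2]|hlt]; last by right.
  left; split => // k; exact: (perm_mem hpe).
right; rewrite hid.
move/forallPn: hall => [[k hk] /=]; rewrite -ltnNge => hlt.
by rewrite (vsig_none yd hk hlt).
Qed.
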